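(* Let $h$ be a $1$-times weak Lefschetz O-sequence, let $n=h_1$ and $R=K[x_1,\ldots,x_n]$. Then the monomial ideal $\mathcal{W}_{1}(h)\subset R$ is strongly stable.
   Context: $K$ is an infinite field of characteristic $0$. An O-sequence is a sequence of non-negative integers that is the Hilbert function of some standard graded $K$-algebra; a finite O-sequence $h: 1=h_0,h_1,\ldots,h_s$ with $h_s\neq 0$ (and $h_d=0$ for $d>s$) has length $s$. $h$ is unimodal if $h_0<h_1<\cdots<h_k\ge h_{k+1}\ge\cdots\ge h_s$ for some $k$; then $\Delta h$ denotes the sequence $1, h_1-h_0,\ldots,h_k-h_{k-1}$. $h$ is a ($1$-times) weak Lefschetz O-sequence if it is unimodal and $\Delta h$ is an O-sequence. Monomials are ordered with $x_1>x_2>\cdots>x_n$; ''rev-lex'' means the degree reverse lexicographic order. For an O-sequence $g$ with $g_1=n-1$, $\mathrm{Lex}(g)\subset R'=K[x_1,\ldots,x_{n-1}]$ is the lex-segment ideal: its degree-$d$ component is spanned by the largest $\dim R'_d-g_d$ monomials of degree $d$ in lexicographic order, so $R'/\mathrm{Lex}(g)$ has Hilbert function $g$. Construction of $\mathcal{W}_1(h)$: start with $I=\mathrm{Lex}(\Delta h)R$ (the extension to $R$). While the Hilbert function of $R/I$ differs from $h$, let $d_0$ be the least degree where they differ, set $r=\dim_K(R/I)_{d_0}-h_{d_0}$ (this is positive), and replace $I$ by $I$ plus the ideal generated by the $r$ largest (in rev-lex order) monomials of degree $d_0$ not in $I$. After finitely many steps $R/I$ has Hilbert function $h$; the resulting ideal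 is $\mathcal{W}_1(h)$. A monomial ideal $I$ is strongly stable if for every monomial $M\in I$ and every variable $x_k$ dividing $M$, $(x_i/x_k)M\in I$ for all $i<k$. *)

(* Defs.v *)
From HB Require Import structures.
From mathcomp Require Import all_boot all_order all_algebra.
From mathcomp Require Import mpoly.
Set Implicit Arguments. Unset Strict Implicit. Unset Printing Implicit Defensive.
Import GRing.Theory.
Local Open Scope ring_scope.

(* A standard graded K-algebra is (up to isomorphism) K[x_1..x_m]/I    *)
(* with I a homogeneous ideal.                                          *)

Definition is_ideal (K : fieldType) (m : nat) (I : {mpoly K[m]} -> Prop) :=
  [/\ I 0,
      (forall p q, I p -> I q -> I (p + q)) &
      (forall p q, I q -> I (p * q))].

Definition is_homog_ideal (K : fieldType) (m : nat) (I : {mpoly K[m]} -> Prop) :=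
  is_ideal I /\ forall p d, I p -> I (@pihomog m K mdeg d p).

(* dim_K (K[x_1..x_m]/I)_d = c : there are c homogeneous forms of degree d
   whose classes form a K-basis of (R/I)_d *)
Definition hilb_val (K : fieldType) (m : nat) (I : {mpoly K[m]} -> Prop)
    (d c : nat) : Prop :=
  exists p : 'I_c -> {mpoly K[m]},
  [/\ forall i, p i \is d.-homog,
      (forall a : 'I_c -> K, I (\sum_(i < c) a i *: p i) -> forall i, a i = 0) &
      (forall q : {mpoly K[m]}, q \is d.-homog ->
         exists a : 'I_c -> K, I (q - \sum_(i < c) a i *: p i))].

Definition O_sequence (K : fieldType) (h : nat -> nat) : Prop :=
  exists (m : nat) (I : {mpoly K[m]} -> Prop),
    is_homog_ideal I /\ forall d, hilb_val I d (h d).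

Definition finite_of_length (h : nat -> nat) (s : nat) : Prop :=
  [/\ h 0 = 1%N, h s <> 0%N & forall d, (s < d)%N -> h d = 0%N].

Definition unimodal_at (h : nat -> nat) (k : nat) : Prop :=
  (forall i, (i < k)%N -> (h i < h i.+1)%N) /\
  (forall i, (k <= i)%N -> (h i.+1 <= h i)%N).

Definition deltah (h : nat -> nat) (k : nat) (i : nat) : nat :=
  if i == 0%N then 1%N else if (i <= k)%N then (h i - h i.-1)%N else 0%N.

(* Monomials of K[x_1..x_n] are the multinomials 'X_{1..n}; x_1 is the
   variable of index 0.  A monomial ideal is represented by the (boolean)
   predicate of the monomials it contains.                               *)

Definition mons (n d : nat) : seq 'X_{1..n} :=
  [seq bmnm x | x <- enum {: 'X_{1..n < d.+1}} & mdeg (bmnm x) == d].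

Definition mdiv n (u a : 'X_{1..n}) : bool := [forall i, (u i <= a i)%N].

Definition lex_gt n (a b : 'X_{1..n}) : bool :=
  [exists i : 'I_n, [forall j : 'I_n, (j < i)%N ==> (a j == b j)] && (b i < a i)%N].
Definition lex_ge n (a b : 'X_{1..n}) : bool := (a == b) || lex_gt a b.

Definition revlex_gt n (a b : 'X_{1..n}) : bool :=
  (mdeg b < mdeg a)%N ||
  ((mdeg a == mdeg b) &&
   [exists i : 'I_n, [forall j : 'I_n, (i < j)%N ==> (a j == b j)] && (a i < b i)%N]).
Definition revlex_ge n (a b : 'X_{1..n}) : bool := (a == b) || revlex_gt a b.

Definition largest T (ge : rel T) (r : nat) (s : seq T) : seq T :=
  take r (sort ge s).

(* degree-d component of Lex(g) in R' = K[x_1..x_{n-1}] (here R' has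
   n' variables): the dim R'_d - g_d lex-largest monomials of degree d *)
Definition lex_comp (n' : nat) (g : nat -> nat) (d : nat) : seq 'X_{1..n'} :=
  largest (@lex_ge n') (size (mons n' d) - g d) (mons n' d).

Definition restr n (a : 'X_{1..n}) : 'X_{1..n.-1} :=
  [multinom a (widen_ord (leq_pred n) i) | i < n.-1].

(* a is in the extension Lex(g)R, the ideal of R generated by Lex(g):
   some element of Lex(g) divides a (such a divisor has degree <= deg a) *)
Definition in_lex_ext n (g : nat -> nat) (a : 'X_{1..n}) : bool :=
  has (fun e => has (fun u => mdiv u (restr a)) (lex_comp n.-1 g e))
      (iota 0 (mdeg a).+1).

(* The least degree where HF(R/I) and h differ
   increases during the algorithm, so it processes degrees 0,1,2,...
   in turn.  [w1_added n h k d] = monomials added as new generators in the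
   steps concerning degrees < d.  Here k is the peak of h (Delta h = deltah h k). *)
Fixpoint w1_added (n : nat) (h : nat -> nat) (k : nat) (d : nat) : seq 'X_{1..n} :=
  match d with
  | 0 => [::]
  | d'.+1 =>
    let prev := w1_added n h k d' in
    let inI (a : 'X_{1..n}) :=
      in_lex_ext (deltah h k) a || has (fun u => mdiv u a) prev in
    let cands := [seq a <- mons n d' | ~~ inI a] in
    (* r = dim_K (R/I)_{d'} - h_{d'} *)
    let r := (size cands - h d')%N in
    prev ++ largest (@revlex_ge n) r cands
  end.

Definition W1 (n : nat) (h : nat -> nat) (k : nat) (a : 'X_{1..n}) : bool :=
  in_lex_ext (deltah h k) a ||
  has (fun u => mdiv u a) (w1_added n h k (mdeg a).+1).

(* (x_i / x_j) * a, for x_j dividing a *)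
Definition mshift n (i j : 'I_n) (a : 'X_{1..n}) : 'X_{1..n} :=
  [multinom (if l == i then (a l).+1 else if l == j then (a l).-1 else a l) | l < n].

Definition strongly_stable n (I : pred 'X_{1..n}) : Prop :=
  forall (a : 'X_{1..n}) (j : 'I_n), I a -> (0 < a j)%N ->
    forall i : 'I_n, (i < j)%N -> I (mshift i j a).

(* Main.v *)
Require Import Defs.
From HB Require Import structures.
From mathcomp Require Import all_boot all_order all_algebra.
From mathcomp Require Import mpoly.
Set Implicit Arguments. Unset Strict Implicit. Unset Printing Implicit Defensive.

Lemma largest_up (T : eqType) (ge : rel T) r (s : seq T) x y :
  total ge -> transitive ge ->
  x \in largest ge r s -> y \in s -> (ge x y -> x = y) ->
  y \in largest ge r s.
Proof.
move=> tot tr; rewrite /largest => xin ys hxy.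
have srt : sorted ge (sort ge s) := sort_sorted tot s.
have ys' : y \in sort ge s by rewrite mem_sort.
have E := cat_take_drop r (sort ge s).
move: srt ys'; rewrite -{1 2}E sorted_pairwise // pairwise_cat.
case/and3P => /allrelP hall _ _; rewrite mem_cat => /orP[//|yd].
by rewrite -(hxy (hall _ _ xin yd)).
Qed.

Section Orders.
Variable n : nat.
Implicit Types a b c : 'X_{1..n}.

Lemma lex_gt_trans : transitive (@lex_gt n).
Proof.
move=> b a c /existsP[i1 /andP[/forallP H1 L1]] /existsP[i2 /andP[/forallP H2 L2]].
apply/existsP; case: (ltngtP i1 i2) => [lt|lt|/val_inj eq].
- exists i1; apply/andP; split.
  + apply/forallP => j; apply/implyP => jl.
    by rewrite (eqP (implyP (H1 j) jl)) (eqP (implyP (H2 j) (ltn_trans jl lt))).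
  + by rewrite -(eqP (implyP (H2 i1) lt)).
- exists i2; apply/andP; split.
  + apply/forallP => j; apply/implyP => jl.
    by rewrite (eqP (implyP (H1 j) (ltn_trans jl lt))) (eqP (implyP (H2 j) jl)).
  + by rewrite (eqP (implyP (H1 i2) lt)).
- subst i2; exists i1; apply/andP; split; last exact: ltn_trans L2 L1.
  apply/forallP => j; apply/implyP => jl.
  by rewrite (eqP (implyP (H1 j) jl)) (eqP (implyP (H2 j) jl)).
Qed.

Lemma lex_gt_irr a : ~~ lex_gt a a.
Proof. by apply/existsP => -[i /andP[_]]; rewrite ltnn. Qed.

Lemma lex_gt_tot a b : a != b -> lex_gt a b || lex_gt b a.
Proof.
move=> neq.
have [i0 Hi0] : exists i, a i != b i.
  apply/existsP; apply: contraNT neq; rewrite negb_exists => /forallP H.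
  by apply/eqP/mnmP => i; apply/eqP; have := H i; rewrite negbK.
case: (@arg_minnP _ i0 (fun i => a i != b i) (fun i : 'I_n => val i) Hi0) => i Hi Hmin.
have Heq : forall j : 'I_n, (j < i)%N -> a j == b j.
  move=> j jl; apply: contraTT jl => nj; rewrite -leqNgt; exact: Hmin.
case: (ltngtP (a i) (b i)) => [l|l|e]; last by rewrite e eqxx in Hi.
- apply/orP; right; apply/existsP; exists i; rewrite l andbT.
  by apply/forallP => j; apply/implyP => jl; rewrite eq_sym Heq.
- apply/orP; left; apply/existsP; exists i; rewrite l andbT.
  by apply/forallP => j; apply/implyP => jl; rewrite Heq.
Qed.

Lemma lex_ge_total : total (@lex_ge n).
Proof.
move=> a b; case: (eqVneq a b) => [->|neq]; first by rewrite /lex_ge eqxx.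
rewrite /lex_ge (negbTE neq) eq_sym (negbTE neq) /=; exact: lex_gt_tot.
Qed.

Lemma lex_ge_trans : transitive (@lex_ge n).
Proof.
move=> b a c /orP[/eqP->//|H1] /orP[/eqP<-|H2]; first by rewrite /lex_ge H1 orbT.
by rewrite /lex_ge (lex_gt_trans H1 H2) orbT.
Qed.

Lemma lex_ge_gt a b : lex_gt b a -> lex_ge a b -> a = b.
Proof.
move=> H /orP[/eqP//|H']; have := lex_gt_trans H H'; by rewrite (negbTE (lex_gt_irr _)).
Qed.

Lemma revlex_gt_trans : transitive (@revlex_gt n).
Proof.
move=> b a c; rewrite /revlex_gt.
case/orP=> [d1|/andP[/eqP d1 /existsP[i1 /andP[/forallP H1 L1]]]];
case/orP=> [d2|/andP[/eqP d2 /existsP[i2 /andP[/forallP H2 L2]]]].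
- by rewrite (ltn_trans d2 d1).
- by rewrite -d2 d1.
- by rewrite d1 d2.
apply/orP; right; rewrite d1 d2 eqxx /=.
apply/existsP; case: (ltngtP i1 i2) => [lt|lt|/val_inj eq].
- exists i2; apply/andP; split.
  + apply/forallP => j; apply/implyP => jl.
    by rewrite (eqP (implyP (H1 j) (ltn_trans lt jl))) (eqP (implyP (H2 j) jl)).
  + by rewrite (eqP (implyP (H1 i2) lt)).
- exists i1; apply/andP; split.
  + apply/forallP => j; apply/implyP => jl.
    by rewrite (eqP (implyP (H1 j) jl)) (eqP (implyP (H2 j) (ltn_trans lt jl))).
  + by rewrite -(eqP (implyP (H2 i1) lt)).
- subst i2; exists i1; apply/andP; split; last exact: ltn_trans L1 L2.
  apply/forallP => j; apply/implyP => jl.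
  by rewrite (eqP (implyP (H1 j) jl)) (eqP (implyP (H2 j) jl)).
Qed.

Lemma revlex_gt_irr a : ~~ revlex_gt a a.
Proof.
rewrite /revlex_gt ltnn /=; apply/andP => -[_ /existsP[i /andP[_]]]; by rewrite ltnn.
Qed.

Lemma revlex_gt_tot a b : a != b -> revlex_gt a b || revlex_gt b a.
Proof.
move=> neq; rewrite /revlex_gt.
case: (ltngtP (mdeg b) (mdeg a)) => [//|//|de]; rewrite /=.
have [i0 Hi0] : exists i, a i != b i.
  apply/existsP; apply: contraNT neq; rewrite negb_exists => /forallP H.
  by apply/eqP/mnmP => i; apply/eqP; have := H i; rewrite negbK.
case: (@arg_maxnP _ i0 (fun i => a i != b i) (fun i : 'I_n => val i) Hi0) => i Hi Hmax.
have Heq : forall j : 'I_n, (i < j)%N -> a j == b j.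
  move=> j jl; apply: contraTT jl => nj; rewrite -leqNgt; exact: Hmax.
case: (ltngtP (a i) (b i)) => [l|l|e]; last by rewrite e eqxx in Hi.
- apply/orP; left; apply/existsP; exists i; rewrite l andbT.
  by apply/forallP => j; apply/implyP => jl; rewrite Heq.
- apply/orP; right; apply/existsP; exists i; rewrite l andbT.
  by apply/forallP => j; apply/implyP => jl; rewrite eq_sym Heq.
Qed.

Lemma revlex_ge_total : total (@revlex_ge n).
Proof.
move=> a b; case: (eqVneq a b) => [->|neq]; first by rewrite /revlex_ge eqxx.
rewrite /revlex_ge (negbTE neq) eq_sym (negbTE neq) /=; exact: revlex_gt_tot.
Qed.

Lemma revlex_ge_trans : transitive (@revlex_ge n).
Proof.
move=> b a c /orP[/eqP->//|H1] /orP[/eqP<-|H2]; first by rewrite /revlex_ge H1 orbT.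
by rewrite /revlex_ge (revlex_gt_trans H1 H2) orbT.
Qed.

Lemma revlex_ge_gt a b : revlex_gt b a -> revlex_ge a b -> a = b.
Proof.
move=> H /orP[/eqP//|H']; have := revlex_gt_trans H H'; by rewrite (negbTE (revlex_gt_irr _)).
Qed.

End Orders.

Section Mon.
Variable n : nat.
Implicit Types a b u : 'X_{1..n}.
Implicit Types i j : 'I_n.

Lemma mdivP u a : reflect (forall l, u l <= a l)%N (mdiv u a).
Proof. exact: forallP. Qed.

Lemma mdiv_refl a : mdiv a a.
Proof. by apply/mdivP. Qed.

Lemma mdiv_trans a b u : mdiv u a -> mdiv a b -> mdiv u b.
Proof. by move=> /mdivP H1 /mdivP H2; apply/mdivP => l; exact: leq_trans (H1 l) (H2 l). Qed.

Lemma mdiv_mdeg u a : mdiv u a -> (mdeg u <= mdeg a)%N.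
Proof. by move=> /mdivP H; rewrite !mdegE; apply: leq_sum => l _. Qed.

Lemma mshiftE i j a l :
  mshift i j a l = if l == i then (a l).+1 else if l == j then (a l).-1 else a l.
Proof. by rewrite /mshift mnmE. Qed.

Lemma mshift_mdeg i j a : i != j -> (0 < a j)%N -> mdeg (mshift i j a) = mdeg a.
Proof.
move=> ij aj; rewrite !mdegE (bigD1 i) //= (bigD1 j) 1?eq_sym //=.
rewrite [RHS](bigD1 i) //= [in RHS](bigD1 j) 1?eq_sym //=.
rewrite !mshiftE eqxx eq_sym (negbTE ij) eqxx.
rewrite (eq_bigr (fun l => a l)); last first.
  by move=> l /andP[li lj]; rewrite mshiftE (negbTE li) (negbTE lj).
by rewrite addSn -addnS -addSn prednK.
Qed.

Lemma mshift_div i j u a : mdiv u a -> mdiv (mshift i j u) (mshift i j a).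
Proof.
move=> /mdivP H; apply/mdivP => l; rewrite !mshiftE.
case: (l == i); first by rewrite ltnS.
by case: (l == j) => //; rewrite -!subn1 leq_sub2r.
Qed.

Lemma mshift_div_lt i j u a : i != j -> mdiv u a -> (u j < a j)%N -> mdiv u (mshift i j a).
Proof.
move=> ij /mdivP H lt; apply/mdivP => l; rewrite !mshiftE.
case: (eqVneq l i) => [->|_]; first exact: leqW.
case: (eqVneq l j) => [->|_] //; by rewrite -ltnS prednK // (leq_ltn_trans _ lt).
Qed.

Lemma mshift_revlex i j u : (i < j)%N -> (0 < u j)%N -> revlex_gt (mshift i j u) u.
Proof.
move=> ij uj; have nij : i != j by rewrite neq_ltn ij.
rewrite /revlex_gt mshift_mdeg // eqxx ltnn /=.
apply/existsP; exists j; apply/andP; split.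
  apply/forallP => l; apply/implyP => jl; rewrite mshiftE.
  have -> : (l == i) = false by apply/negbTE; rewrite neq_ltn (ltn_trans ij jl) orbT.
  by have -> : (l == j) = false by apply/negbTE; rewrite neq_ltn jl orbT.
by rewrite mshiftE eq_sym (negbTE nij) eqxx prednK ?leqnn // ltnS.
Qed.

Lemma mshift_lex i j u : (i < j)%N -> lex_gt (mshift i j u) u.
Proof.
move=> ij; apply/existsP; exists i; apply/andP; split.
  apply/forallP => l; apply/implyP => li; rewrite mshiftE.
  have -> : (l == i) = false by apply/negbTE; rewrite neq_ltn li.
  by have -> : (l == j) = false by apply/negbTE; rewrite neq_ltn (ltn_trans li ij).
by rewrite mshiftE eqxx.
Qed.

Lemma mem_mons d a : (a \in mons n d) = (mdeg a == d).
Proof.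
apply/idP/idP.
  by case/mapP => x; rewrite mem_filter => /andP[H _] ->.
move=> H; apply/mapP.
have hb : (mdeg a < d.+1)%N by rewrite (eqP H).
exists (BMultinom hb) => //.
by rewrite mem_filter /= H mem_enum.
Qed.

End Mon.

Section Lex.
Variable n : nat.
Variable g : nat -> nat.
Implicit Types a b : 'X_{1..n}.
Implicit Types i j : 'I_n.

Lemma restrE a l : restr a l = a (widen_ord (leq_pred n) l).
Proof. by rewrite /restr mnmE. Qed.

Lemma mdiv_restr a b : mdiv a b -> mdiv (restr a) (restr b).
Proof. by move=> /mdivP H; apply/mdivP => l; rewrite !restrE. Qed.

Lemma lex_ext_mono a b : mdiv a b -> in_lex_ext g a -> in_lex_ext g b.
Proof.
move=> ab /hasP[e ein /hasP[u uin ud]]; apply/hasP; exists e.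
  move: ein; rewrite !mem_iota !add0n /= => /leq_trans; apply; rewrite ltnS.
  exact: mdiv_mdeg.
by apply/hasP; exists u => //; apply: mdiv_trans ud (mdiv_restr ab).
Qed.

Lemma lex_comp_mons e u : u \in lex_comp n.-1 g e -> u \in mons n.-1 e.
Proof. by rewrite /lex_comp /largest => /mem_take; rewrite mem_sort. Qed.

Lemma lex_ext_shift a i j : (i < j)%N -> (0 < a j)%N ->
  in_lex_ext g a -> in_lex_ext g (mshift i j a).
Proof.
move=> ij aj; have nij : i != j by rewrite neq_ltn ij.
rewrite /in_lex_ext mshift_mdeg //.
move=> /hasP[e ein /hasP[u uin ud]]; apply/hasP; exists e => //.
case: (ltnP j n.-1) => jn.
- pose i' : 'I_n.-1 := Ordinal (ltn_trans ij jn).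
  pose j' : 'I_n.-1 := Ordinal jn.
  have wi : widen_ord (leq_pred n) i' = i by apply: val_inj.
  have wj : widen_ord (leq_pred n) j' = j by apply: val_inj.
  have E : restr (mshift i j a) = mshift i' j' (restr a).
    apply/mnmP => l; rewrite restrE !mshiftE restrE.
    have -> : (widen_ord (leq_pred n) l == i) = (l == i') by rewrite -wi; apply/eqP/eqP => [/(congr1 val) H|->]; [apply: val_inj|].
    by have -> : (widen_ord (leq_pred n) l == j) = (l == j') by rewrite -wj; apply/eqP/eqP => [/(congr1 val) H|->]; [apply: val_inj|].
  have ij' : (i' < j')%N by [].
  have nij' : i' != j' by rewrite neq_ltn ij'.
  have aj' : restr a j' = a j by rewrite restrE wj.
  rewrite E; case: (ltnP (u j') (restr a j')) => uj.
    by apply/hasP; exists u => //; apply: mshift_div_lt.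
  have uj' : u j' = restr a j' by apply/eqP; rewrite eqn_leq uj (mdivP _ _ ud).
  have u0 : (0 < u j')%N by rewrite uj' aj'.
  apply/hasP; exists (mshift i' j' u); last exact: mshift_div.
  apply: (largest_up (@lex_ge_total _) (@lex_ge_trans _) uin).
    rewrite mem_mons mshift_mdeg //; rewrite -mem_mons; exact: lex_comp_mons uin.
  by apply: lex_ge_gt; apply: mshift_lex.
- apply/hasP; exists u => //; apply: mdiv_trans ud _.
  apply/mdivP => l; rewrite !restrE mshiftE.
  case: (_ == i) => //.
  have -> : (widen_ord (leq_pred n) l == j) = false.
    apply/negbTE; rewrite neq_ltn /=; apply/orP; left; exact: leq_trans (ltn_ord l) jn.
  by [].
Qed.

End Lex.

Section W.
Variables (n : nat) (h : nat -> nat) (k : nat).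
Implicit Types a b u : 'X_{1..n}.
Implicit Types i j : 'I_n.

Local Notation add := (w1_added n h k).
Local Notation g := (deltah h k).

Definition inI (prev : seq 'X_{1..n}) a :=
  in_lex_ext g a || has (fun u => mdiv u a) prev.
Definition cands d := [seq a <- mons n d | ~~ inI (add d) a].
Definition Lst d := largest (@revlex_ge n) (size (cands d) - h d) (cands d).

Lemma addS d : add d.+1 = add d ++ Lst d.
Proof. by []. Qed.

Lemma add_mono d d' : (d <= d')%N -> {subset add d <= add d'}.
Proof.
elim: d' => [|d' IH]; first by rewrite leqn0 => /eqP->.
rewrite leq_eqVlt => /orP[/eqP->//|]; rewrite ltnS => /IH H u /H.
by rewrite addS mem_cat => ->.
Qed.

Lemma add_deg d u : u \in add d -> u \in Lst (mdeg u) /\ (mdeg u < d)%N.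
Proof.
elim: d => [//|d IH]; rewrite addS mem_cat => /orP[/IH[H1 H2]|H].
  by split => //; apply: ltnW.
have : u \in cands d by move: H; rewrite /Lst /largest => /mem_take; rewrite mem_sort.
rewrite mem_filter mem_mons => /andP[_ /eqP E]; by rewrite E.
Qed.

Lemma W1_mono a b : mdiv a b -> W1 h k a -> W1 h k b.
Proof.
move=> ab /orP[H|/hasP[u uin ud]]; apply/orP; first by left; exact: lex_ext_mono ab H.
right; apply/hasP; exists u; last exact: mdiv_trans ud ab.
by apply: add_mono uin; rewrite ltnS; apply: mdiv_mdeg.
Qed.

Lemma W1_ss : strongly_stable (@W1 n h k).
Proof.
move=> a j Wa aj i ij; have nij : i != j by rewrite neq_ltn ij.
case/orP: Wa => [La|/hasP[u uin ud]].
  by apply/orP; left; apply: lex_ext_shift.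
case: (ltnP (u j) (a j)) => uj.
  apply/orP; right; apply/hasP; exists u; last exact: mshift_div_lt.
  by rewrite mshift_mdeg.
have uj' : u j = a j by apply/eqP; rewrite eqn_leq uj (mdivP _ _ ud).
have u0 : (0 < u j)%N by rewrite uj'.
apply: (W1_mono (mshift_div i j ud)).
have [uL _] := add_deg uin.
set e := mdeg u in uL.
have de : mdeg (mshift i j u) = e by rewrite mshift_mdeg.
case Ie : (inI (add e) (mshift i j u)).
  case/orP: Ie => [H|/hasP[v vin vd]]; apply/orP; [by left|right].
  apply/hasP; exists v => //; rewrite de; apply: add_mono vin; exact: leqnSn.
have ic : mshift i j u \in cands e by rewrite mem_filter Ie mem_mons de eqxx.
have uL' : mshift i j u \in Lst e.
  apply: (largest_up (@revlex_ge_total _) (@revlex_ge_trans _) uL ic).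
  by apply: revlex_ge_gt; apply: mshift_revlex.
apply/orP; right; apply/hasP; exists (mshift i j u); last exact: mdiv_refl.
by rewrite de addS mem_cat uL' orbT.
Qed.

End W.

Unset Implicit Arguments.

Theorem lemma3p1 (K : fieldType) (h : nat -> nat) (s k n : nat) :
  [pchar K]%R =i pred0 ->
  finite_of_length h s ->
  O_sequence K h ->
  unimodal_at h k ->
  O_sequence K (deltah h k) ->
  n = h 1%N ->
  strongly_stable (@W1 n h k).
Proof. move=> *; exact: W1_ss. Qed.
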